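(* Let $V$ be an infinite Gödel set. A sentence of the BS class w.r.t. validity is valid in $G_V$ if and only if it is valid in $G_n$ for every $n\ge2$; and a sentence of the BS class w.r.t. 1-satisfiability is 1-satisfiable in $G_V$ if and only if it is 1-satisfiable in $G_n$ for every $n\ge2$. In particular, $\mathrm{BS}(G_{[0,1]})=\bigcap_{n\ge2}\mathrm{BS}(G_n)$.
   Context: A Gödel set is a closed set $V\subseteq[0,1]$ with $0,1\in V$. A $V$-interpretation assigns to each $k$-ary predicate a function $U^k\to V$ on a nonempty domain $U$ (constants as usual); $\bot\mapsto0$, $\wedge,\vee$ are $\min,\max$, $\mathcal I(A\supset B)=1$ if $\mathcal I(A)\le\mathcal I(B)$ and $=\mathcal I(B)$ otherwise, $\forall,\exists$ are $\inf,\sup$ over $U$. A sentence is valid in $G_V$ if every $V$-interpretation gives it value $1$, and 1-satisfiable in $G_V$ if some $V$-interpretation gives it value $1$. $G_{[0,1]}$ is $G_V$ with $V=[0,1]$; for $n\ge2$, $G_n$ is $G_V$ with $V=\{1\}\cup\{1-1/k:1\le k\le n-1\}$. The BS class w.r.t. validity consists of sentences $\forall\bar x\exists\bar y\,\psi$, and w.r.t. 1-satisfiability of sentences $\exists\bar x\forall\bar y\,\psi$, with $\psi$ quantifier-free, tuples possibly empty, and no function symbols of positive arity. $\mathrm{BS}(G)$ denotes the set of BS sentences (w.r.t. validity) valid in $G$. *)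

(* Defs.v *)
From HB Require Import structures.
From mathcomp Require Import all_boot all_order all_algebra.
From mathcomp Require Import boolp classical_sets cardinality reals topology.
From mathcomp Require Import Rstruct Rstruct_topology.
Unset Printing Implicit Defensive.
Import Order.TTheory GRing.Theory Num.Theory.
Local Open Scope classical_set_scope.
Local Open Scope ring_scope.

Definition RR := Rdefinitions.R.

Inductive term := Var of nat | Cst of nat.

(* Formulas. [Atom p ts] is the (size ts)-ary predicate symbol named p applied to ts;
   predicate symbols are identified by the pair (name, arity). *)
Inductive form :=
| Bot
| Atom of nat & seq term
| And of form & form
| Or of form & form
| Imp of form & form
| All of nat & form
| Ex of nat & form.

Fixpoint tvars (ts : seq term) : seq nat :=
  match ts with
  | [::] => [::]
  | Var n :: ts' => n :: tvars ts'
  | Cst _ :: ts' => tvars ts'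
  end.

Fixpoint fv (A : form) : seq nat :=
  match A with
  | Bot => [::]
  | Atom _ ts => tvars ts
  | And A B | Or A B | Imp A B => fv A ++ fv B
  | All x A | Ex x A => seq.filter (fun y => y != x) (fv A)
  end.

Definition sentence (A : form) : Prop := fv A = [::].

Fixpoint qfree (A : form) : bool :=
  match A with
  | Bot | Atom _ _ => true
  | And A B | Or A B | Imp A B => qfree A && qfree B
  | All _ _ | Ex _ _ => false
  end.

Definition alls (xs : seq nat) (A : form) := foldr All A xs.
Definition exs (xs : seq nat) (A : form) := foldr Ex A xs.

Definition BS_valid (A : form) : Prop :=
  sentence A /\ exists xs ys psi, qfree psi /\ A = alls xs (exs ys psi).

Definition BS_sat (A : form) : Prop :=
  sentence A /\ exists xs ys psi, qfree psi /\ A = exs xs (alls ys psi).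

Definition goedel_set (V : set RR) : Prop :=
  closed V /\ V `<=` [set x | 0 <= x <= 1] /\ V 0 /\ V 1.

Definition V01 : set RR := [set x | 0 <= x <= 1].

Definition Vn (n : nat) : set RR :=
  [set x | x = 1 \/ exists k : nat, (1 <= k <= n.-1)%N /\ x = 1 - k%:R^-1].

Record interp (V : set RR) := Interp {
  dom : Type;
  dom_pt : dom;
  icst : nat -> dom;
  ipred : nat -> seq dom -> RR;
  ipred_V : forall p us, V (ipred p us)
}.
Arguments dom {V} i.
Arguments dom_pt {V} i.
Arguments icst {V} i _.
Arguments ipred {V} i _ _.
Arguments ipred_V {V} i _ _.

Definition upd {U : Type} (e : nat -> U) (x : nat) (u : U) : nat -> U :=
  fun y => if y == x then u else e y.

Definition tval {V : set RR} (I : interp V) (e : nat -> dom I) (t : term) : dom I :=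
  match t with Var n => e n | Cst c => icst I c end.

Definition gimp (a b : RR) : RR := if a <= b then 1 else b.

Fixpoint eval {V : set RR} (I : interp V) (e : nat -> dom I) (A : form) : RR :=
  match A with
  | Bot => 0
  | Atom p ts => ipred I p (map (tval I e) ts)
  | And A B => Num.min (eval I e A) (eval I e B)
  | Or A B => Num.max (eval I e A) (eval I e B)
  | Imp A B => gimp (eval I e A) (eval I e B)
  | All x A => inf [set eval I (upd e x u) A | u in [set: dom I]]
  | Ex x A => sup [set eval I (upd e x u) A | u in [set: dom I]]
  end.

(* Value of a sentence (independent of the environment for sentences). *)
Definition value {V : set RR} (I : interp V) (A : form) : RR := eval I (fun _ => dom_pt I) A.

Definition valid (V : set RR) (A : form) : Prop := forall I : interp V, value I A = 1.
Definition sat1 (V : set RR) (A : form) : Prop := exists I : interp V, value I A = 1.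

(* Main.v *)
Require Import Defs.
From HB Require Import structures.
From mathcomp Require Import all_boot all_order all_algebra.
From mathcomp Require Import boolp classical_sets cardinality reals topology.
From mathcomp Require Import Rstruct Rstruct_topology.
Import Order.TTheory GRing.Theory Num.Theory.
Local Open Scope classical_set_scope.
Local Open Scope ring_scope.

Definition in01 (V : set RR) := forall x, V x -> 0 <= x <= 1.

Section Q.
Variables (V : set RR) (HV : in01 V) (I : interp V).

Lemma img_ne e x A : [set Defs.eval I (upd e x u) A | u in [set: dom I]] !=set0.
Proof. by exists (Defs.eval I (upd e x (dom_pt I)) A); exists (dom_pt I). Qed.

Lemma eval01 e A : 0 <= Defs.eval I e A <= 1.
Proof.
elim: A e => [|p ts|A IHA B IHB|A IHA B IHB|A IHA B IHB|x A IHA|x A IHA] e /=.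
- by rewrite lexx ler01.
- exact: HV (ipred_V I p _).
- case/andP: (IHA e) => a0 a1; case/andP: (IHB e) => b0 b1.
  by rewrite le_min ge_min a0 b0 a1.
- case/andP: (IHA e) => a0 a1; case/andP: (IHB e) => b0 b1.
  by rewrite le_max ge_max a0 a1 b1.
- rewrite /gimp; case: ifP => _; first by rewrite ler01 lexx.
  exact: IHB.
- apply/andP; split.
  + apply: lb_le_inf; first exact: img_ne.
    by move=> _ [u _ <-]; case/andP: (IHA (upd e x u)).
  + have hl : has_lbound [set Defs.eval I (upd e x u) A | u in [set: dom I]].
      by exists 0 => _ [u _ <-]; case/andP: (IHA (upd e x u)).
    apply: le_trans (ge_inf hl _) _; first by exists (dom_pt I).
    by case/andP: (IHA (upd e x (dom_pt I))).
- apply/andP; split.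
  + have hl : has_ubound [set Defs.eval I (upd e x u) A | u in [set: dom I]].
      by exists 1 => _ [u _ <-]; case/andP: (IHA (upd e x u)).
    apply: le_trans (ub_le_sup hl _); last by exists (dom_pt I).
    by case/andP: (IHA (upd e x (dom_pt I))).
  + apply: ge_sup; first exact: img_ne.
    by move=> _ [u _ <-]; case/andP: (IHA (upd e x u)).
Qed.
End Q.
Arguments eval01 {V}. Arguments img_ne {V}.

Inductive reach {T : Type} : seq nat -> (nat -> T) -> (nat -> T) -> Prop :=
| reach0 e : reach [::] e e
| reachS x xs e u e' : reach xs (upd e x u) e' -> reach (x :: xs) e e'.

Lemma reach_notin {T} xs (e e' : nat -> T) : reach xs e e' ->
  forall v, v \notin xs -> e' v = e v.
Proof.
elim=> // x {}xs {}e u {}e' _ IH v; rewrite in_cons negb_or => /andP[vx vxs].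
by rewrite IH // /upd (negbTE vx).
Qed.

Lemma reach_fun {T} xs (e : nat -> T) (g : nat -> T) :
  reach xs e (fun v => if v \in xs then g v else e v).
Proof.
elim: xs e => [|x xs IH] e /=.
  have -> : (fun v : nat => if v \in [::] then g v else e v) = e by apply: funext.
  exact: reach0.
apply: (reachS _ _ _ (g x)).
have -> : (fun v => if v \in x :: xs then g v else e v) =
  (fun v => if v \in xs then g v else upd e x (g x) v).
  apply: funext => v; rewrite in_cons /upd.
  by case: (v =P x) => [->|]; case: (_ \in _).
exact: IH.
Qed.

Section Q2.
Variables (V : set RR) (HV : in01 V) (I : interp V).

Lemma hlb e x A : has_lbound [set Defs.eval I (upd e x u) A | u in [set: dom I]].
Proof. by exists 0 => _ [u _ <-]; case/andP: (eval01 HV I (upd e x u) A). Qed.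
Lemma hub e x A : has_ubound [set Defs.eval I (upd e x u) A | u in [set: dom I]].
Proof. by exists 1 => _ [u _ <-]; case/andP: (eval01 HV I (upd e x u) A). Qed.

Lemma Q1 xs e e' B : reach xs e e' -> Defs.eval I e (alls xs B) <= Defs.eval I e' B.
Proof.
elim=> // x {}xs {}e u {}e' _ IH /=.
apply: le_trans IH; apply: (ge_inf (hlb e x (alls xs B))); by exists u.
Qed.

Lemma Q2 xs e e' B : reach xs e e' -> Defs.eval I e' B <= Defs.eval I e (exs xs B).
Proof.
elim=> // x {}xs {}e u {}e' _ IH /=.
apply: le_trans IH _; apply: (ub_le_sup (hub e x (exs xs B))); by exists u.
Qed.

Lemma Q3 xs e B c : Defs.eval I e (alls xs B) < c ->
  exists e', reach xs e e' /\ Defs.eval I e' B < c.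
Proof.
elim: xs e => [|x xs IH] e /=; first by move=> h; exists e; split=> //; constructor.
move=> /(inf_lt (img_ne _ _ _ _))[_ [u _ <-]] /IH[e' [r h]].
by exists e'; split=> //; apply: reachS r.
Qed.

Lemma Q4 xs e B c : c < Defs.eval I e (exs xs B) ->
  exists e', reach xs e e' /\ c < Defs.eval I e' B.
Proof.
elim: xs e => [|x xs IH] e /=; first by move=> h; exists e; split=> //; constructor.
move=> /(sup_gt (img_ne _ _ _ _))[_ [u _ <-]] /IH[e' [r h]].
by exists e'; split=> //; apply: reachS r.
Qed.

Lemma Q5 xs e B c : (forall e', reach xs e e' -> c <= Defs.eval I e' B) ->
  c <= Defs.eval I e (alls xs B).
Proof.
elim: xs e => [|x xs IH] e /= h; first by apply: h; constructor.
apply: lb_le_inf; first exact: img_ne.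
move=> _ [u _ <-]; apply: IH => e' r; apply: h; exact: reachS r.
Qed.

Lemma Q6 xs e B c : (forall e', reach xs e e' -> Defs.eval I e' B <= c) ->
  Defs.eval I e (exs xs B) <= c.
Proof.
elim: xs e => [|x xs IH] e /= h; first by apply: h; constructor.
apply: ge_sup; first exact: img_ne.
move=> _ [u _ <-]; apply: IH => e' r; apply: h; exact: reachS r.
Qed.
End Q2.
Arguments Q1 {V}. Arguments Q2 {V}. Arguments Q3 {V}. Arguments Q4 {V}. Arguments Q5 {V}. Arguments Q6 {V}.

Fixpoint atomsP (P : nat -> seq term -> Prop) (A : Defs.form) : Prop :=
  match A with
  | Atom p ts => P p ts
  | And a b | Or a b | Imp a b => atomsP P a /\ atomsP P b
  | _ => True
  end.

Lemma atomsP_impl (P Q : nat -> seq term -> Prop) A :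
  (forall p ts, P p ts -> Q p ts) -> atomsP P A -> atomsP Q A.
Proof.
move=> PQ; elim: A => //=.
- by move=> a iha b ihb [? ?]; split; [apply: iha|apply: ihb].
- by move=> a iha b ihb [? ?]; split; [apply: iha|apply: ihb].
- by move=> a iha b ihb [? ?]; split; [apply: iha|apply: ihb].
Qed.

Section Transfer.
Variables (V V' : set RR) (I : interp V) (J : interp V') (f : dom J -> dom I)
  (h : RR -> RR) (W : set RR).
Hypotheses (W0 : W 0) (W1 : W 1) (h0 : h 0 = 0) (h1 : h 1 = 1)
  (hmono : forall a b, W a -> W b -> a <= b -> h a <= h b)
  (hstr : forall a b, W a -> W b -> b < a -> h b < h a \/ h b = 1).

Lemma transfer psi (e : nat -> dom J) : qfree psi ->
  atomsP (fun p ts => ipred J p (map (Defs.tval J e) ts) = h (ipred I p (map (Defs.tval I (f \o e)) ts))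
      /\ W (ipred I p (map (Defs.tval I (f \o e)) ts))) psi ->
  Defs.eval J e psi = h (Defs.eval I (f \o e) psi) /\ W (Defs.eval I (f \o e) psi).
Proof.
elim: psi => [|p ts|a iha b ihb|a iha b ihb|a iha b ihb|//|//] /=.
- by rewrite h0.
- by [].
- move=> /andP[qa qb] [Pa Pb]; case: (iha qa Pa) (ihb qb Pb) => -> Wa [-> Wb].
  set x := Defs.eval I _ a; set y := Defs.eval I _ b.
  case: (leP x y) => xy; split => //.
  + by rewrite min_l // hmono.
  + by rewrite min_r // hmono // ltW.
- move=> /andP[qa qb] [Pa Pb]; case: (iha qa Pa) (ihb qb Pb) => -> Wa [-> Wb].
  set x := Defs.eval I _ a; set y := Defs.eval I _ b.
  case: (leP x y) => xy; split => //.
  + by rewrite max_r // hmono.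
  + by rewrite max_l // hmono // ltW.
- move=> /andP[qa qb] [Pa Pb]; case: (iha qa Pa) (ihb qb Pb) => -> Wa [-> Wb].
  set x := Defs.eval I _ a; set y := Defs.eval I _ b.
  rewrite /gimp; case: (leP x y) => xy.
  + by rewrite hmono // h1.
  + split=> //; case: (hstr _ _ Wa Wb xy) => [hl|->].
    * by rewrite leNgt hl.
    * by case: ifP.
Qed.
End Transfer.

Section Rank.
Variables (src tgt : seq RR).
Hypotheses (src0 : 0 \in src) (srcge : forall v, v \in src -> 0 <= v < 1)
  (tsort : sorted <%R tgt) (thead : nth 0 tgt 0 = 0) (tlt1 : forall v, v \in tgt -> v < 1)
  (tsize : (size src <= size tgt)%N).

Definition rk (v : RR) := count (fun w => w < v) (undup src).
Definition hmap (v : RR) := if 1 <= v then 1 else nth 0 tgt (rk v).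
Definition Wr (v : RR) : Prop := v \in src \/ v = 1.

Lemma tgt0 : 0 \in tgt.
Proof.
have sz : (0 < size tgt)%N.
  by apply: leq_trans tsize; case: (src) src0.
by rewrite -thead mem_nth.
Qed.

Lemma hmap_range v : hmap v \in tgt \/ hmap v = 1.
Proof.
rewrite /hmap; case: ifP => _; first by right.
left; case: (ltnP (rk v) (size tgt)) => h; first exact: mem_nth.
by rewrite nth_default // tgt0.
Qed.

Lemma hmap_le1 v : hmap v <= 1.
Proof. by case: (hmap_range v) => [/tlt1/ltW|->]. Qed.

Lemma rk_lt v : v \in src -> (rk v < size tgt)%N.
Proof.
move=> vs; apply: leq_trans tsize; apply: leq_trans (size_undup src).
rewrite /rk -(count_predC (fun w => w < v) (undup src)) -addn1 leq_add2l.
by rewrite -has_count; apply/hasP; exists v; rewrite ?mem_undup //= ltxx.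
Qed.

Lemma hmap_src v : v \in src -> hmap v = nth 0 tgt (rk v).
Proof. by move=> /srcge /andP[_ v1]; rewrite /hmap leNgt v1. Qed.

Lemma hmap_lt1 v : v \in src -> hmap v < 1.
Proof. by move=> vs; rewrite hmap_src // tlt1 // mem_nth // rk_lt. Qed.

Lemma hmap0 : hmap 0 = 0.
Proof.
rewrite hmap_src // /rk (eq_in_count (a2 := pred0)) ?count_pred0 //.
by move=> w; rewrite mem_undup => /srcge /andP[w0 _] /=; rewrite ltNge w0.
Qed.

Lemma hmap1 : hmap 1 = 1.
Proof. by rewrite /hmap lexx. Qed.

Lemma rk_mono a b : a <= b -> (rk a <= rk b)%N.
Proof. by move=> ab; apply: sub_count => w /= wa; apply: lt_le_trans ab. Qed.

Lemma rk_strict a b : a \in src -> a < b -> (rk a < rk b)%N.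
Proof.
move=> as_ ab; rewrite /rk.
have := count_predUI (fun w => w < a) (pred1 a) (undup src).
rewrite count_uniq_mem ?undup_uniq // mem_undup as_ /=.
rewrite (eq_count (a1 := predI _ _) (a2 := pred0)); last by move=> w /=; case: eqP => [->|_]; rewrite ?ltxx ?andbF.
rewrite count_pred0 addn0 => e; rewrite -addn1 -e.
apply: sub_count => w /= /orP[wa|/eqP ->] //; exact: lt_trans ab.
Qed.

Lemma hmap_mono a b : Wr a -> Wr b -> a <= b -> hmap a <= hmap b.
Proof.
move=> Wa [bs|->]; last by rewrite hmap1 hmap_le1.
case: Wa => [as_|a1].
  move=> ab; rewrite !hmap_src // (lt_sorted_leq_nth 0 tsort) ?inE ?rk_lt //.
  exact: rk_mono.
by move=> ab; move: (srcge _ bs) => /andP[_]; rewrite ltNge -a1 ab.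
Qed.

Lemma hmap_str a b : Wr a -> Wr b -> b < a -> hmap b < hmap a \/ hmap b = 1.
Proof.
move=> Wa [bs|->] ba; last by right; rewrite hmap1.
left; case: Wa ba => [as_|->] ba; last by rewrite hmap1 hmap_lt1.
rewrite !hmap_src // (lt_sorted_ltn_nth 0 tsort) ?inE ?rk_lt //.
exact: rk_strict.
Qed.

End Rank.

Definition vf (k : nat) : RR := 1 - (k%:R)^-1.
Definition vlist (n : nat) : seq RR := [seq vf k | k <- iota 1 n.-1].

Lemma vf_lt k l : (0 < k)%N -> (k < l)%N -> vf k < vf l.
Proof.
move=> k0 kl; rewrite /vf ltrD2l ltrN2 ltf_pV2 ?posrE ?ltr0n ?ltr_nat //.
exact: ltn_trans kl.
Qed.

Lemma vf_le k l : (0 < k)%N -> (k <= l)%N -> vf k <= vf l.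
Proof.
move=> k0; rewrite leq_eqVlt => /orP[/eqP->//|kl]; exact/ltW/vf_lt.
Qed.

Lemma vf_ge0 k : (0 < k)%N -> 0 <= vf k.
Proof.
move=> k0; rewrite /vf subr_ge0 invf_le1 ?ltr0n // ler1n //.
Qed.

Lemma vf_lt1 k : (0 < k)%N -> vf k < 1.
Proof. by move=> k0; rewrite /vf ltrBlDr ltrDl invr_gt0 ltr0n. Qed.

Lemma vf1 : vf 1 = 0.
Proof. by rewrite /vf invr1 subrr. Qed.

Lemma vlist_sorted n : sorted <%R (vlist n).
Proof.
apply: (homo_sorted_in (P := fun k => (0 < k)%N)); last exact: iota_ltn_sorted.
  by move=> k l k0 l0 kl; apply: vf_lt.
by apply/allP => k; rewrite mem_iota; case/andP.
Qed.

Lemma size_vlist n : size (vlist n) = n.-1.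
Proof. by rewrite size_map size_iota. Qed.

Lemma vlist_head n : (2 <= n)%N -> nth 0 (vlist n) 0 = 0.
Proof. by case: n => [|[|n]] //= _; rewrite vf1. Qed.

Lemma vlistP n x : reflect (exists k, (1 <= k <= n.-1)%N /\ x = vf k) (x \in vlist n).
Proof.
apply: (iffP mapP) => [[k]|[k [kr ->]]].
  by rewrite mem_iota add1n ltnS => kr ->; exists k.
by exists k => //; rewrite mem_iota add1n ltnS.
Qed.

Lemma Vn_iff n x : Vn n x <-> x = 1 \/ x \in vlist n.
Proof.
split=> [[->|[k [kr ->]]]|[->|/vlistP [k [kr ->]]]]; [by left|right|by left|right].
  by apply/vlistP; exists k.
by exists k.
Qed.

Lemma vlist_bnd n x : x \in vlist n -> 0 <= x <= vf n.-1 /\ x < 1.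
Proof.
case/vlistP=> k [/andP[k1 kn] ->]; split; last exact: vf_lt1.
by rewrite vf_ge0 // vf_le.
Qed.

Lemma in01_Vn n : in01 (Vn n).
Proof.
move=> x /Vn_iff [->|/vlist_bnd [/andP[x0 _] /ltW x1]]; first by rewrite ler01 lexx.
by rewrite x0 x1.
Qed.

Lemma in_vlist_last n : (2 <= n)%N -> vf n.-1 \in vlist n.
Proof. by move=> n2; apply/vlistP; exists n.-1; rewrite leqnn andbT; case: n n2 => [|[|n]]. Qed.

Lemma eval_qf_in (V : set RR) (I : interp V) (W : set RR) e psi :
  W 0 -> W 1 -> (forall p us, W (ipred I p us)) -> qfree psi -> W (Defs.eval I e psi).
Proof.
move=> W0 W1 WI; elim: psi => //= [a iha b ihb|a iha b ihb|a iha b ihb] /andP[qa qb].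
- by case: leP => _; [apply: iha|apply: ihb].
- by case: leP => _; [apply: ihb|apply: iha].
- by rewrite /gimp; case: ifP => _; [|apply: ihb].
Qed.

Lemma tvars_ext {V} (I : interp V) e e' ts :
  (forall v, v \in tvars ts -> e v = e' v) -> map (Defs.tval I e) ts = map (Defs.tval I e') ts.
Proof.
elim: ts => //= [[v|c] ts IH] H /=.
  by rewrite H ?mem_head // IH // => w wi; apply: H; rewrite in_cons wi orbT.
by rewrite IH.
Qed.

Lemma eval_ext {V} (I : interp V) e e' psi : qfree psi ->
  (forall v, v \in fv psi -> e v = e' v) -> Defs.eval I e psi = Defs.eval I e' psi.
Proof.
elim: psi => //= [p ts _ H|a iha b ihb /andP[qa qb] H|a iha b ihb /andP[qa qb] H|a iha b ihb /andP[qa qb] H].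
- by rewrite (tvars_ext I _ _ _ H).
all: by rewrite iha ?ihb // => v vi; apply: H; rewrite mem_cat vi ?orbT.
Qed.

Lemma atomsP_all (P : nat -> seq term -> Prop) A : (forall p ts, P p ts) -> atomsP P A.
Proof. by move=> H; elim: A => //= *; split. Qed.

Fixpoint tcsts (ts : seq term) : seq nat :=
  match ts with
  | [::] => [::]
  | Cst c :: ts' => c :: tcsts ts'
  | Var _ :: ts' => tcsts ts'
  end.

Fixpoint csts (A : Defs.form) : seq nat :=
  match A with
  | Atom _ ts => tcsts ts
  | And a b | Or a b | Imp a b => csts a ++ csts b
  | _ => [::]
  end.

Fixpoint atoms (A : Defs.form) : seq (nat * seq term) :=
  match A with
  | Atom p ts => [:: (p, ts)]
  | And a b | Or a b | Imp a b => atoms a ++ atoms b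
  | _ => [::]
  end.

Lemma atoms_self A : atomsP (fun p ts => List.In (p, ts) (atoms A) /\
   (forall c, c \in tcsts ts -> c \in csts A)) A.
Proof.
elim: A => //= [p ts|a iha b ihb|a iha b ihb|a iha b ihb]; first by split; [left|].
all: split; (apply: atomsP_impl; last by [apply: iha| apply: ihb]);
  move=> p ts [h1 h2]; (split; [apply: List.in_or_app; by [left|right]|
     by move=> c /h2; rewrite mem_cat => ->; rewrite ?orbT]).
Qed.

Definition bnd (s : seq nat) := foldr maxn 0%N s.
Lemma bnd_ge s x : x \in s -> (x <= bnd s)%N.
Proof.
elim: s => //= y s IH; rewrite in_cons => /orP[/eqP->|/IH h]; first exact: leq_maxl.
exact: leq_trans h (leq_maxr _ _).
Qed.


Definition relax (V V' : set RR) (HVV : forall x, V x -> V' x) (J : interp V) : interp V' :=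
  Interp V' (dom J) (dom_pt J) (icst J) (ipred J) (fun p us => HVV _ (ipred_V J p us)).

Lemma relax_eval V V' HVV (J : interp V) e A : Defs.eval (@relax V V' HVV J) e A = Defs.eval J e A.
Proof.
elim: A e => //= [a iha b ihb|a iha b ihb|a iha b ihb|x a iha|x a iha] e.
- by rewrite iha ihb.
- by rewrite iha ihb.
- by rewrite iha ihb.
- by congr (inf _); apply: eq_imagel => u _; apply: iha.
- by congr (sup _); apply: eq_imagel => u _; apply: iha.
Qed.

Lemma dirS1 (V : set RR) (V0 : V 0) (V1 : V 1) A :
  (forall n, (2 <= n)%N -> sat1 (Vn n) A) -> sat1 V A.
Proof.
move=> /(_ 2%N isT) [J HJ].
have HVV : forall x, Vn 2 x -> V x.
  move=> x /Vn_iff [->//|]; rewrite /vlist /= vf1 inE => /eqP ->//.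
by exists (@relax _ _ HVV J); rewrite /value relax_eval.
Qed.

Definition hpos (v : RR) : RR := if 0 < v then 1 else 0.

Lemma hpos_Vn n v : (2 <= n)%N -> Vn n (hpos v).
Proof.
move=> n2; apply/Vn_iff; rewrite /hpos; case: ifP => _; first by left.
by right; rewrite -vf1; apply/vlistP; exists 1%N; rewrite leqnn /= -ltnS prednK // ltnW.
Qed.

Definition posI (V : set RR) (I : interp V) n (n2 : (2 <= n)%N) : interp (Vn n) :=
  Interp (Vn n) (dom I) (dom_pt I) (icst I) (fun p us => hpos (ipred I p us))
    (fun p us => @hpos_Vn n (ipred I p us) n2).

Lemma dirS2 (V : set RR) (HV : in01 V) A : BS_sat A ->
  sat1 V A -> forall n, (2 <= n)%N -> sat1 (Vn n) A.
Proof.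
move=> [_ [xs [ys [psi [qf ->]]]]] [I HI] n n2.
pose J := @posI V I n n2.
exists J.
have hIV : in01 (Vn n) := @in01_Vn n.
have [e' [r He']] : exists e', reach xs (fun _ => dom_pt I) e' /\
    0 < Defs.eval I e' (alls ys psi).
  apply: (Q4 I xs (fun _ => dom_pt I) (alls ys psi) 0).
  by rewrite -/(value I _) HI ltr01.
have W0 : [set x : RR | 0 <= x <= 1] 0 by rewrite /= lexx ler01.
have W1 : [set x : RR | 0 <= x <= 1] 1 by rewrite /= lexx ler01.
have h0 : hpos 0 = 0 by rewrite /hpos ltxx.
have h1 : hpos 1 = 1 by rewrite /hpos ltr01.
have hm : forall a b, [set x : RR | 0 <= x <= 1] a -> [set x : RR | 0 <= x <= 1] b ->
    a <= b -> hpos a <= hpos b.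
  move=> a b /andP[a0 _] /andP[b0 _] ab; rewrite /hpos.
  case: ifP => c1; case: ifP => c2; rewrite ?lexx ?ler01 //.
  by rewrite (lt_le_trans c1 ab) in c2.
have hs : forall a b, [set x : RR | 0 <= x <= 1] a -> [set x : RR | 0 <= x <= 1] b ->
    b < a -> hpos b < hpos a \/ hpos b = 1.
  move=> a b /andP[a0 _] /andP[b0 _] ba; rewrite /hpos.
  case: ifP => c1; first by right.
  by left; rewrite ifT ?ltr01 //; exact: le_lt_trans b0 ba.
have key : forall e'', reach ys e' e'' -> 1 <= Defs.eval J e'' psi.
  move=> e'' r2.
  have := @transfer V (Vn n) I J (fun x => x) hpos [set x | 0 <= x <= 1]
    W0 W1 h0 h1 hm hs psi e'' qf.
  case.
    apply: atomsP_all => p ts; split=> //; exact: HV (ipred_V I p _).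
  move=> -> _; rewrite /hpos ifT ?lexx //; apply: lt_le_trans He' _; exact: Q1 HV I _ _ _ _ r2.
apply/eqP; rewrite eq_le; apply/andP; split.
  by case/andP: (eval01 hIV J (fun _ => dom_pt J) (exs xs (alls ys psi))).
rewrite /value; apply: le_trans (Q2 hIV J _ _ _ _ r).
exact: Q5 J _ _ _ _ key.
Qed.

Definition Hpts (V : set RR) := forall t : seq RR, exists x, V x /\ (0 < x < 1) /\ x \notin t.

Lemma inf_Hpts (V : set RR) (HV : in01 V) (Vinf : infinite_set V) : Hpts V.
Proof.
move=> s; apply: contrapT => nH; apply: Vinf.
apply: (sub_finite_set _ (finite_seq (0 :: 1 :: s))) => x Vx /=.
rewrite !inE; case/andP: (HV x Vx); rewrite !le_eqVlt => /orP[/eqP<-|x0]; first by rewrite eqxx.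
case/orP=> [/eqP->|x1]; first by rewrite eqxx orbT.
apply/orP; right; apply/orP; right; apply: contrapT => xs; apply: nH.
by exists x; split=> //; split; [rewrite x0 x1 | apply/negP].
Qed.

Lemma getpts (V : set RR) (HP : Hpts V) k :
  exists s : seq RR, [/\ uniq s, size s = k & forall x, x \in s -> V x /\ 0 < x < 1].
Proof.
elim: k => [|k [s [us ss Hs]]]; first by exists [::].
have [x [Vx [/andP[x0 x1] xs]]] := HP s.
exists (x :: s); split=> //=; first by rewrite xs.
  by rewrite ss.
by move=> y; rewrite inE => /orP[/eqP->|/Hs]; [rewrite x0 x1|].
Qed.

Lemma tgt_sorted (s : seq RR) : uniq s -> (forall x, x \in s -> 0 < x) ->
  sorted <%R (0 :: sort <=%R s).
Proof.
move=> us pos; rewrite /= path_sortedE; last exact: lt_trans.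
apply/andP; split.
  by apply/allP => x; rewrite mem_sort => /pos.
by rewrite lt_sorted_uniq_le sort_uniq us sort_sorted //; exact: le_total.
Qed.

Lemma dirV1 (V : set RR) (HV : in01 V) (V0 : V 0) (V1 : V 1) (HP : Hpts V) A :
  BS_valid A -> valid V A -> forall n, (2 <= n)%N -> valid (Vn n) A.
Proof.
move=> [_ [xs [ys [psi [qf ->]]]]] vV n n2 J.
have hIV : in01 (Vn n) := @in01_Vn n.
have [s [uniqs ss Hs]] := @getpts V HP n.
set src := vlist n.
set tgt := 0 :: sort <=%R s.
have src0 : 0 \in src by rewrite -vf1; apply/vlistP; exists 1%N; rewrite leqnn /= -ltnS prednK // ltnW.
have srcge : forall v, v \in src -> 0 <= v < 1.
  by move=> v /vlist_bnd [/andP[v0 _] v1]; rewrite v0 v1.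
have tsort : sorted <%R tgt by apply: tgt_sorted => // x /Hs [_ /andP[]].
have thead : nth 0 tgt 0 = 0 by [].
have tlt1 : forall v, v \in tgt -> v < 1.
  by move=> v; rewrite inE mem_sort => /orP[/eqP->|/Hs [_ /andP[]]] //; rewrite ltr01.
have tsize : (size src <= size tgt)%N.
  rewrite /= size_sort ss size_vlist; exact: leq_trans (leq_pred n) (leqnSn n).
have tV : forall v, v \in tgt -> V v.
  by move=> v; rewrite inE mem_sort => /orP[/eqP->|/Hs []].
have hV : forall v, V (hmap src tgt v).
  by move=> v; case: (hmap_range src tgt src0 thead tsize v) => [/tV|->].
pose I := Interp V (dom J) (dom_pt J) (icst J) (fun p us => hmap src tgt (ipred J p us))
  (fun p us => hV (ipred J p us)).
have WJ : forall p us, Wr src (ipred J p us).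
  move=> p us; case/Vn_iff: (ipred_V J p us) => [->|h]; [by right|by left].
have tr : forall e, Defs.eval I e psi = hmap src tgt (Defs.eval J e psi) /\ Wr src (Defs.eval J e psi).
  move=> e; apply: (@transfer (Vn n) V J I (fun x => x) (hmap src tgt) (Wr src)) => //.
  - by left.
  - by right.
  - exact: (hmap0 src tgt src0 srcge thead).
  - exact: hmap1.
  - exact: (hmap_mono src tgt src0 srcge tsort thead tlt1 tsize).
  - exact: (hmap_str src tgt srcge tsort tlt1 tsize).
  - by apply: atomsP_all => p ts; split.
apply/eqP; rewrite eq_le; case/andP: (eval01 hIV J (fun _ => dom_pt J) (alls xs (exs ys psi))) => _ -> /=.
rewrite leNgt; apply/negP => lt1.
have [e' [r He']] := Q3 J _ _ _ _ lt1.
set M := hmap src tgt (vf n.-1).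
have M1 : M < 1 by apply: (hmap_lt1 src tgt srcge tlt1 tsize); exact: in_vlist_last.
have key : forall e'', reach ys e' e'' -> Defs.eval I e'' psi <= M.
  move=> e'' r2; case: (tr e'') => -> WW.
  apply: (hmap_mono src tgt src0 srcge tsort thead tlt1 tsize) => //; first by left; exact: in_vlist_last.
  have lt : Defs.eval J e'' psi < 1 by apply: le_lt_trans He'; exact: Q2 hIV J _ _ _ _ r2.
  case: WW => [/vlist_bnd [/andP[_ ->]] //|e1]; by rewrite e1 ltxx in lt.
have := vV I; rewrite /value => HI.
have hV01 : in01 V := HV.
have : Defs.eval I (fun _ => dom_pt I) (alls xs (exs ys psi)) <= M.
  apply: le_trans (Q1 HV I _ _ _ _ r) _.
  exact: Q6 I _ _ _ _ key.
by rewrite HI leNgt M1.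
Qed.

Fixpoint tups (T : finType) (l : nat) : seq (seq T) :=
  if l is l'.+1 then [seq x :: t | x <- enum T, t <- tups T l'] else [:: [::]].

Lemma mem_tups (T : finType) (us : seq T) : us \in tups T (size us).
Proof.
elim: us => [|x us IH] /=; first by rewrite mem_seq1.
by apply: (allpairs_f (fun x t => x :: t)); rewrite ?mem_enum.
Qed.

Fixpoint Sv (D : finType) (val : nat -> seq D -> RR) (A : Defs.form) : seq RR :=
  match A with
  | Atom p ts => [seq val p us | us <- tups D (size ts)]
  | And a b | Or a b | Imp a b => Sv D val a ++ Sv D val b
  | _ => [::]
  end.

Arguments Sv {D}.

Lemma Sv_in (D : finType) val A v : v \in @Sv D val A -> exists p us, v = val p us.
Proof.
elim: A => //= [p ts|a iha b ihb|a iha b ihb|a iha b ihb]; first by case/mapP=> us _ ->; exists p, us.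
all: by rewrite mem_cat => /orP[/iha|/ihb].
Qed.

Lemma Sv_self (D : finType) val A :
  atomsP (fun p ts => forall us, size us = size ts -> val p us \in @Sv D val A) A.
Proof.
elim: A => //= [p ts us <-|a iha b ihb|a iha b ihb|a iha b ihb]; first by apply: (map_f (val p)); exact: mem_tups.
all: split; (apply: atomsP_impl; last by [apply: iha| apply: ihb]);
  by move=> p ts h us /h; rewrite mem_cat => ->; rewrite ?orbT.
Qed.

Lemma atomsP_and (P Q : nat -> seq term -> Prop) A :
  atomsP P A -> atomsP Q A -> atomsP (fun p ts => P p ts /\ Q p ts) A.
Proof.
elim: A => //= [a iha b ihb|a iha b ihb|a iha b ihb] [? ?] [? ?]; split; by [apply: iha|apply: ihb].
Qed.

Lemma reach_sim {T U : Type} (f : T -> U) (P : nat -> Prop) ys a b e'' :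
  (forall v, P v -> f (a v) = b v) -> reach ys a e'' ->
  exists e3, reach ys b e3 /\ forall v, P v -> f (e'' v) = e3 v.
Proof.
move=> H r; elim: r b H => [e|x xs e u e2 _ IH] b H; first by exists b; split=> //; constructor.
have [e3 [r3 H3]] := IH (upd b x (f u)) (fun v Pv => ltac:(rewrite /upd; case: (v == x) => //; exact: H)).
by exists e3; split=> //; apply: reachS r3.
Qed.

Lemma dirV2 (V : set RR) (HV : in01 V) A : BS_valid A ->
  (forall n, (2 <= n)%N -> valid (Vn n) A) -> valid V A.
Proof.
move=> [_ [xs [ys [psi [qf ->]]]]] vn I.
apply/eqP; rewrite eq_le; case/andP: (eval01 HV I (fun _ => dom_pt I) (alls xs (exs ys psi))) => _ -> /=.
rewrite leNgt; apply/negP => lt1.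
have [e' [r He']] := Q3 I _ _ _ _ lt1.
have [N [fvN cN]] : exists N, (forall v, v \in fv psi -> (v < N)%N) /\
    (forall c, c \in csts psi -> (c < N)%N).
  exists (bnd (fv psi ++ csts psi)).+1; split.
    by move=> v vi; rewrite ltnS bnd_ge // mem_cat vi.
  by move=> c ci; rewrite ltnS bnd_ge // mem_cat ci orbT.
pose L := dom_pt I :: ([seq e' v | v <- iota 0 N] ++ [seq icst I c | c <- iota 0 N]).
pose D := 'I_(N + N).+1.
pose f := fun j : D => nth (dom_pt I) L j.
pose jv := fun v : nat => (inord v.+1 : D).
pose jc := fun c : nat => (inord (N + c).+1 : D).
have fjv : forall v, (v < N)%N -> f (jv v) = e' v.
  move=> v vN; rewrite /f /jv inordK; last by rewrite ltnS (leq_trans vN) // leq_addr.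
  rewrite /L /= nth_cat size_map size_iota vN (nth_map 0%N) ?size_iota // nth_iota //.
have fjc : forall c, (c < N)%N -> f (jc c) = icst I c.
  move=> c cN'; rewrite /f /jc inordK; last by rewrite ltnS ltn_add2l.
  rewrite /L /= nth_cat size_map size_iota ltnNge leq_addr /= addKn.
  by rewrite (nth_map 0%N) ?size_iota // nth_iota.
pose val := fun p (us : seq D) => ipred I p (map f us).
pose S := Sv val psi.
pose src := 0 :: [seq w <- S | w < 1].
pose n := (size src).+1.
have n2 : (2 <= n)%N by [].
pose tgt := vlist n.
have src0 : 0 \in src by rewrite mem_head.
have srcge : forall v, v \in src -> 0 <= v < 1.
  move=> v; rewrite inE => /orP[/eqP->|]; first by rewrite lexx ltr01.
  rewrite mem_filter => /andP[v1 /Sv_in [p [us vE]]]; rewrite v1 andbT vE.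
  by case/andP: (HV _ (ipred_V I p (map f us))).
have tsort : sorted <%R tgt by apply: vlist_sorted.
have thead : nth 0 tgt 0 = 0 by apply: vlist_head.
have tlt1 : forall v, v \in tgt -> v < 1 by move=> v /vlist_bnd [].
have tsize : (size src <= size tgt)%N by rewrite size_vlist.
have hVn : forall v, Vn n (hmap src tgt v).
  move=> v; apply/Vn_iff; case: (hmap_range src tgt src0 thead tsize v); by [right|left].
pose J := Interp (Vn n) D ord0 jc (fun p us => hmap src tgt (val p us))
  (fun p us => hVn (val p us)).
have hIV : in01 (Vn n) := @in01_Vn n.
have tr : forall e, Defs.eval J e psi = hmap src tgt (Defs.eval I (f \o e) psi) /\
    Wr src (Defs.eval I (f \o e) psi).
  move=> e; apply: (@transfer V (Vn n) I J f (hmap src tgt) (Wr src)) => //.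
  - by left.
  - by right.
  - exact: (hmap0 src tgt src0 srcge thead).
  - exact: (hmap1 src tgt).
  - exact: (hmap_mono src tgt src0 srcge tsort thead tlt1 tsize).
  - exact: (hmap_str src tgt srcge tsort tlt1 tsize).
  have H1 := @Sv_self D val psi. have H2 := atomsP_and _ _ _ (atoms_self psi) H1. apply: (atomsP_impl _ _ _ _ H2).
  move=> p ts [[_ Hc] Hs].
  have em : map (Defs.tval I (f \o e)) ts = map f (map (Defs.tval J e) ts).
    move: Hc {Hs}; elim: ts => //= t ts IH Hc; case: t Hc => [v|c] Hc /=.
      by rewrite IH.
    rewrite fjc; last by apply: cN; apply: Hc; exact: mem_head.
    by rewrite IH // => c' h; apply: Hc; rewrite inE h orbT.
  rewrite em; split=> //.
  have := Hs (map (Defs.tval J e) ts) (size_map _ _).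
  change (val p (map (Defs.tval J e) ts) \in S -> Wr src (val p (map (Defs.tval J e) ts))).
  move: (val p _) => w wS.
  have [w1|w1] := boolP (w < 1); first by left; rewrite inE mem_filter w1 wS orbT.
  right; apply/eqP; rewrite eq_le [1 <= w]leNgt w1 andbT.
  by case/Sv_in: wS => p' [us ->]; case/andP: (HV _ (ipred_V I p' (map f us))).
pose eJ := fun v => if v \in xs then jv v else (ord0 : D).
have rJ : reach xs (fun _ => dom_pt J) eJ by exact: reach_fun.
have agree : forall v, (v < N)%N -> f (eJ v) = e' v.
  move=> v vN; rewrite /eJ; case: ifP => vx; first exact: fjv.
  by rewrite (reach_notin _ _ _ r) ?vx.
set M := vf n.-1.
have key : forall e'', reach ys eJ e'' -> Defs.eval J e'' psi <= M.
  move=> e'' r2.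
  have [e3 [r3 H3]] := @reach_sim _ _ f (fun v => (v < N)%N) _ _ _ _ agree r2.
  case: (tr e'') => -> WW.
  have wlt : Defs.eval I (f \o e'') psi < 1.
    rewrite (eval_ext I (f \o e'') e3 psi qf); last by move=> v vi; exact: H3 (fvN v vi).
    apply: le_lt_trans He'; exact: Q2 HV I _ _ _ _ r3.
  case: WW => [ws|w1]; last by rewrite w1 ltxx in wlt.
  have : hmap src tgt (Defs.eval I (f \o e'') psi) \in tgt.
    case: (hmap_range src tgt src0 thead tsize (Defs.eval I (f \o e'') psi)) => // h1.
    by have := hmap_lt1 src tgt srcge tlt1 tsize _ ws; rewrite h1 ltxx.
  by case/vlist_bnd => /andP[_].
have : Defs.value J (alls xs (exs ys psi)) <= M.
  apply: le_trans (Q1 hIV J _ _ _ _ rJ) _; exact: Q6 J _ _ _ _ key.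
rewrite (vn n n2 J) => h.
have : M < 1 by apply: vf_lt1; rewrite -ltnS prednK // ltnW.
by rewrite ltNge h.
Qed.

Definition mx (t : seq RR) := foldr (fun y acc => if y < 1 then Num.max y acc else acc) 0 t.

Lemma mxP t : [/\ 0 <= mx t, mx t < 1 & forall y, y \in t -> y < 1 -> y <= mx t].
Proof.
elim: t => [|y t [IH0 IH1 IHb]] /=; first by split=> //; rewrite ltr01.
rewrite /mx /= -/(mx t); case: ifP => y1.
  split; [by rewrite le_max IH0 orbT | by rewrite gt_max y1 IH1|].
  by move=> z; rewrite inE => /orP[/eqP->|zt] z1; rewrite le_max ?lexx // IHb ?orbT.
split=> // z; rewrite inE => /orP[/eqP->|zt]; [by rewrite y1|exact: IHb].
Qed.

Lemma V01_Hpts : Hpts V01.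
Proof.
move=> t; have [m0 m1 mb] := mxP t; set m := mx t in m0 m1 mb.
have [hm h1] := midf_lt m1.
exists ((m + 1) / 2); split; last split.
- rewrite /V01 /=; apply/andP; split; apply: ltW; [exact: le_lt_trans m0 hm|exact: h1].
- by rewrite h1 andbT (le_lt_trans m0 hm).
- apply/negP => xt; have := mb _ xt h1; by rewrite leNgt hm.
Qed.

Local Close Scope ring_scope.

Theorem corollary5p4 :
  (forall V : set RR, goedel_set V -> infinite_set V ->
     (forall A, BS_valid A -> (valid V A <-> forall n : nat, (2 <= n)%N -> valid (Vn n) A)) /\
     (forall A, BS_sat A -> (sat1 V A <-> forall n : nat, (2 <= n)%N -> sat1 (Vn n) A))) /\
  (forall A, BS_valid A -> (valid V01 A <-> forall n : nat, (2 <= n)%N -> valid (Vn n) A)).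
Proof.
have HV01 : in01 V01 by [].
split.
  move=> V [_ [HVs [V0 V1]]] Vinf.
  have HV : in01 V by move=> x /HVs.
  have HP := @inf_Hpts V HV Vinf.
  split=> A hA; split.
  - exact: (@dirV1 V HV V0 V1 HP A hA).
  - exact: (@dirV2 V HV A hA).
  - exact: (@dirS2 V HV A hA).
  - exact: (@dirS1 V V0 V1 A).
move=> A hA; split.
- apply: (@dirV1 V01 HV01 _ _ V01_Hpts A hA); rewrite /V01 /= ?lexx ?ler01 //.
- exact: (@dirV2 V01 HV01 A hA).
Qed.
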